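(* Let $B_J=L+U\in\mathbb R^{n\times n}$ with $L$ strictly lower triangular and $U$ strictly upper triangular, and assume all the matrices $L^{(j)}_c$ ($1\le j\le n-1$), $U^{(j)}_c$ ($2\le j\le n$), $L^{(i)}_r$ ($2\le i\le n$), $U^{(i)}_r$ ($1\le i\le n-1$) are nonzero. Consider the splittings $\mathcal B_{FTC}=(L^{(1)}_c,\dots,L^{(n-1)}_c,U^{(n)}_c,\dots,U^{(2)}_c)$ and $\mathcal B_{FTR}=(L^{(2)}_r,\dots,L^{(n)}_r,U^{(n-1)}_r,\dots,U^{(1)}_r)$ of $B_J$ (each of order $2n-2$), and the symmetric Gauss–Seidel matrix $B_{sGS}=(I-U)^{-1}L(I-L)^{-1}U$. Then $T(\mathcal B_{FTC})$, $T(\mathcal B_{FTR})$ and $B_{sGS}$ all have the same nonzero eigenvalues.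
   Context: For $j\in\{1,\dots,n-1\}$, $L^{(j)}_c$ is the $n\times n$ matrix equal to $L$ in column $j$ (rows $i\ge j+1$) and zero elsewhere; for $j\in\{2,\dots,n\}$, $U^{(j)}_c$ equals $U$ in column $j$ (rows $i\le j-1$) and is zero elsewhere; for $i\in\{2,\dots,n\}$, $L^{(i)}_r$ equals $L$ in row $i$ (columns $j\le i-1$) and is zero elsewhere; for $i\in\{1,\dots,n-1\}$, $U^{(i)}_r$ equals $U$ in row $i$ (columns $j\ge i+1$) and is zero elsewhere. For $B\in\mathbb R^{n\times n}$, a splitting of $B$ of order $d\ge1$ is an ordered $d$-tuple $\mathcal B=(B_1,\dots,B_d)$ of real $n\times n$ matrices with $B_p\neq O$ for all $p$, $\sum_{p=1}^d B_p=B$, and $B_p\circ B_q=O$ (Hadamard product) for $p\ne q$. The iteration matrix of $\mathcal B$ is the $dn\times dn$ matrix $T(\mathcal B)=(I_{dn}-\mathcal L)^{-1}\mathcal U$, where $\mathcal L,\mathcal U$ are $d\times d$ block matrices with $n\times n$ blocks, $\mathcal L_{ij}=B_j$ if $i>j$ and $O$ otherwise, $\mathcal U_{ij}=B_j$ if $i\le j$ and $O$ otherwise. *)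

(* Defs.v *)
From HB Require Import structures.
From mathcomp Require Import all_boot all_order all_algebra.
From mathcomp Require Import reals complex.
Set Implicit Arguments. Unset Strict Implicit. Unset Printing Implicit Defensive.
Import Order.TTheory GRing.Theory Num.Theory.
Local Open Scope ring_scope.

Section Defs.
Variable R : realType.

(* Indices are 0-based: paper index k corresponds to Rocq index k-1. *)

Definition strictly_lower n (L : 'M[R]_n) := forall i j : 'I_n, (i <= j)%N -> L i j = 0.
Definition strictly_upper n (U : 'M[R]_n) := forall i j : 'I_n, (j <= i)%N -> U i j = 0.

Definition Lcol n (L : 'M[R]_n) (j : nat) : 'M[R]_n :=
  \matrix_(i, k) if (k == j :> nat) && (j < i)%N then L i k else 0.
Definition Ucol n (U : 'M[R]_n) (j : nat) : 'M[R]_n :=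
  \matrix_(i, k) if (k == j :> nat) && (i < j)%N then U i k else 0.
Definition Lrow n (L : 'M[R]_n) (i : nat) : 'M[R]_n :=
  \matrix_(r, k) if (r == i :> nat) && (k < i)%N then L r k else 0.
Definition Urow n (U : 'M[R]_n) (i : nat) : 'M[R]_n :=
  \matrix_(r, k) if (r == i :> nat) && (i < k)%N then U r k else 0.

Definition blockL n d (Bs : 'I_d -> 'M[R]_n) : 'M[R]_(\sum_(p < d) n) :=
  \mxblock_(i < d, j < d) (if (j < i)%N then Bs j else 0).
Definition blockU n d (Bs : 'I_d -> 'M[R]_n) : 'M[R]_(\sum_(p < d) n) :=
  \mxblock_(i < d, j < d) (if (i <= j)%N then Bs j else 0).

Definition iter_mx n d (Bs : 'I_d -> 'M[R]_n) : 'M[R]_(\sum_(p < d) n) :=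
  invmx (1%:M - blockL Bs) *m blockU Bs.

Definition FTC n (L U : 'M[R]_n) (p : 'I_(2 * n - 2)) : 'M[R]_n :=
  if (p < n - 1)%N then Lcol L p else Ucol U (2 * n - 2 - p).
Definition FTR n (L U : 'M[R]_n) (p : 'I_(2 * n - 2)) : 'M[R]_n :=
  if (p < n - 1)%N then Lrow L p.+1 else Urow U (2 * n - 3 - p).

Definition sGS n (L U : 'M[R]_n) : 'M[R]_n :=
  invmx (1%:M - U) *m L *m invmx (1%:M - L) *m U.

Definition nz_eigenvalue m (A : 'M[R]_m) (z : R[i]) : Prop :=
  z != 0 /\ root (map_poly (real_complex R) (char_poly A)) z.

End Defs.

(* Main.v *)
Require Import Defs.
From HB Require Import structures.
From mathcomp Require Import all_boot all_order all_algebra.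
From mathcomp Require Import reals complex.
From mathcomp Require Import zify.
Import Order.TTheory GRing.Theory Num.Theory.
Local Open Scope ring_scope.
Set Implicit Arguments. Unset Strict Implicit. Unset Printing Implicit Defensive.

Lemma root_char_eigvec (F : fieldType) m (B : 'M[F]_m) z :
  root (char_poly B) z <-> exists c : 'cV_m, c != 0 /\ B *m c = z *: c.
Proof.
rewrite -eigenvalue_root_char.
have -> : eigenvalue B z = (\det (z%:M - B) == 0).
  apply/eigenvalueP/det0P=> [[v Av_av v_nz] | [v v_nz Av_av]]; exists v => //.
    by rewrite mulmxBr Av_av mul_mx_scalar subrr.
  by apply/eqP; rewrite -mul_mx_scalar eq_sym -subr_eq0 -mulmxBr Av_av.
rewrite -det_tr linearB /= tr_scalar_mx.
split.
  move/det0P=> [v vn0 hv]; exists v^T; split; first by rewrite trmx_eq0.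
  have e: (z%:M - B) *m v^T = (v *m (z%:M - B^T))^T.
    by rewrite trmx_mul linearB /= tr_scalar_mx trmxK.
  apply/eqP; rewrite eq_sym -subr_eq0 -mul_scalar_mx -mulmxBl.
  by rewrite e hv trmx0.
move=> [c [cn0 hc]]; apply/det0P; exists c^T; first by rewrite trmx_eq0.
have e: c^T *m (z%:M - B^T) = ((z%:M - B) *m c)^T.
  by rewrite trmx_mul; congr (_ *m _); rewrite linearB /= tr_scalar_mx.
by rewrite e mulmxBl hc mul_scalar_mx subrr trmx0.
Qed.

Section Gen.
Variable F : fieldType.

Definition gL n d (Bs : 'I_d -> 'M[F]_n) : 'M[F]_(\sum_(p < d) n) :=
  \mxblock_(i < d, j < d) (if (j < i)%N then Bs j else 0).
Definition gU n d (Bs : 'I_d -> 'M[F]_n) : 'M[F]_(\sum_(p < d) n) :=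
  \mxblock_(i < d, j < d) (if (i <= j)%N then Bs j else 0).

Lemma unit_of_ker m (A : 'M[F]_m) :
  (forall c : 'cV_m, A *m c = 0 -> c = 0) -> A \in unitmx.
Proof.
move=> h; rewrite unitmxE unitfE -det_tr; apply/negP => /det0P [v vn0 hv].
have : v^T = 0 by apply: h; rewrite -(trmxK A) -trmx_mul hv trmx0.
by move/eqP; rewrite trmx_eq0 (negbTE vn0).
Qed.

Lemma scale_mxcol n d (x : 'I_d -> 'cV[F]_n) (z : F) :
  z *: \mxcol_i x i = \mxcol_i (z *: x i).
Proof. by apply/matrixP => i j; rewrite !mxE. Qed.

Lemma gL_mul n d (Bs : 'I_d -> 'M[F]_n) (x : 'I_d -> 'cV[F]_n) :
  gL Bs *m \mxcol_j x j = \mxcol_i \sum_(j < d | (j < i)%N) Bs j *m x j.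
Proof.
rewrite /gL mul_mxblock_mxrow; apply: eq_mxcol => i.
rewrite [RHS]big_mkcond; apply: eq_bigr => j _ /=.
by case: ifP => _ //; rewrite mul0mx.
Qed.

Lemma gU_mul n d (Bs : 'I_d -> 'M[F]_n) (x : 'I_d -> 'cV[F]_n) :
  gU Bs *m \mxcol_j x j = \mxcol_i \sum_(j < d | (i <= j)%N) Bs j *m x j.
Proof.
rewrite /gU mul_mxblock_mxrow; apply: eq_mxcol => i.
rewrite [RHS]big_mkcond; apply: eq_bigr => j _ /=.
by case: ifP => _ //; rewrite mul0mx.
Qed.

Lemma gL_unit n d (Bs : 'I_d -> 'M[F]_n) : (1%:M - gL Bs) \in unitmx.
Proof.
apply: unit_of_ker => c; rewrite mulmxBl mul1mx => /eqP; rewrite subr_eq0 => /eqP hc.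
pose x i := submxcol c i.
have cE : c = \mxcol_i x i by rewrite submxcolK.
move: hc; rewrite cE gL_mul => /eq_mxcolP hx.
have x0 : forall k (i : 'I_d), (i < k)%N -> x i = 0.
  elim=> [|k IH] i //; rewrite ltnS => hik.
  rewrite hx big1 // => j hj; rewrite IH ?mulmx0 //.
  exact: leq_trans hj hik.
have {}x0 : forall i, x i = 0 by move=> i; apply: (x0 d.+1); rewrite ltnS ltnW.
by rewrite (@eq_mxcol _ _ _ _ _ (fun i => 0) x0) mxcol0.
Qed.

Lemma block_eig n d (Bs : 'I_d -> 'M[F]_n) (z : F) : z != 0 ->
  (exists c : 'cV_(\sum_(p < d) n), c != 0 /\ invmx (1%:M - gL Bs) *m gU Bs *m c = z *: c) <->
  (exists x : 'I_d -> 'cV[F]_n, (exists i, x i != 0) /\ forall i,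
     z *: x i = \sum_(j < d | (i <= j)%N) Bs j *m x j
                + z *: \sum_(j < d | (j < i)%N) Bs j *m x j).
Proof.
move=> zn0; have hu := gL_unit Bs.
have key : forall x : 'I_d -> 'cV[F]_n,
  (invmx (1%:M - gL Bs) *m gU Bs *m (\mxcol_i x i : 'cV_(\sum_(p < d) n)) = z *: \mxcol_i x i) <->
  (forall i, z *: x i = \sum_(j < d | (i <= j)%N) Bs j *m x j
                + z *: \sum_(j < d | (j < i)%N) Bs j *m x j).
  move=> x; split.
  - move=> h.
    have h2 : gU Bs *m \mxcol_i x i = (1%:M - gL Bs) *m (z *: \mxcol_i x i).
      by rewrite -h !mulmxA mulmxV // mul1mx.
    move: h2; rewrite -scalemxAr mulmxBl mul1mx gU_mul gL_mul -mxcolB scale_mxcol.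
    move/eq_mxcolP => hx i; by rewrite hx -scalerDr subrK.
  - move=> hx.
    rewrite -mulmxA; apply: (canLR (mulKmx hu)).
    rewrite -scalemxAr mulmxBl mul1mx gU_mul gL_mul -mxcolB scale_mxcol.
    apply: eq_mxcol => i.
    by rewrite scalerBr hx addrK.
split.
- move=> [c [cn0 hc]]; exists (fun i => submxcol c i); split; last first.
    by apply/key; rewrite submxcolK.
  case: (pickP (fun i => submxcol c i != 0)) => [i hi | h]; first by exists i.
  move: cn0; rewrite -(submxcolK c).
  have e : forall i, submxcol c i = 0 by move=> i; move: (h i) => /negbFE /eqP.
  by rewrite (@eq_mxcol _ _ _ _ _ (fun i => 0) e) mxcol0 eqxx.
- move=> [x [[i xi] hx]]; exists (\mxcol_i x i); split; last by apply/key.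
  apply: contraNneq xi => c0.
  by rewrite -(mxcolK x i) c0 submxcol0.
Qed.
End Gen.

Section Core.
Variables (F : fieldType) (n d m : nat) (Bs : 'I_d -> 'M[F]_n) (z : F).

Definition Sx (i : nat) (a : 'I_d -> 'cV[F]_n) :=
  \sum_(l < d | (i <= l)%N) a l + z *: \sum_(l < d | (l < i)%N) a l.

Lemma SE i a : Sx i a = \sum_(l < d) (if (i <= l)%N then a l else z *: a l).
Proof.
rewrite /Sx [X in X + _]big_mkcond [X in _ *: X]big_mkcond scaler_sumr -big_split.
apply: eq_bigr => l _ /=; case: leqP => _; rewrite ?scaler0 ?addr0 ?add0r //.
Qed.

Lemma S_mul (A : 'M[F]_n) i a :
  A *m Sx i a = Sx i (fun l => A *m a l).
Proof.
rewrite !SE mulmx_sumr; apply: eq_bigr => l _; case: ifP => _ //.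
by rewrite scalemxAr.
Qed.

Lemma S_ext i a b : (forall l : 'I_d, a l = b l) -> Sx i a = Sx i b.
Proof. by move=> h; rewrite !SE; apply: eq_bigr => l _; rewrite h. Qed.

Lemma sum_LU (a : 'I_d -> 'cV[F]_n) :
  \sum_(l < d) a l = \sum_(l < d | (l < m)%N) a l + \sum_(l < d | (m <= l)%N) a l.
Proof.
rewrite (bigID (fun l : 'I_d => (l < m)%N)) /=; congr (_ + _).
by apply: eq_bigl => l; rewrite -leqNgt.
Qed.

Lemma S0 a : Sx 0 a = \sum_(l < d) a l.
Proof. by rewrite SE; apply: eq_bigr. Qed.


Hypotheses (hm : (m < d)%N) (zn0 : z != 0)
 (hLL : forall j l : 'I_d, (j <= l)%N -> (l < m)%N -> Bs j *m Bs l = 0)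
 (hUU : forall j l : 'I_d, (m <= j)%N -> (j <= l)%N -> Bs j *m Bs l = 0).
Variables (L U : 'M[F]_n).
Hypotheses (hL : \sum_(l < d | (l < m)%N) Bs l = L)
  (hU : \sum_(l < d | (m <= l)%N) Bs l = U)
  (uL : (1%:M - L) \in unitmx) (uU : (1%:M - U) \in unitmx).

Definition gsGS := invmx (1%:M - U) *m L *m invmx (1%:M - L) *m U.

Lemma S_shiftL (j : 'I_d) a : (j < m)%N ->
  (forall l : 'I_d, (j <= l)%N -> (l < m)%N -> a l = 0) -> Sx j a = Sx m a.
Proof.
move=> hj h; rewrite !SE; apply: eq_bigr => l _.
case: (leqP j l) => h1; case: (leqP m l) => h2 //.
- by rewrite h ?scaler0.
- lia.
Qed.

Lemma S_top (j : 'I_d) a :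
  (forall l : 'I_d, (j <= l)%N -> a l = 0) -> Sx j a = z *: \sum_(l < d) a l.
Proof.
move=> h; rewrite SE scaler_sumr; apply: eq_bigr => l _.
by case: leqP => // hl; rewrite h ?scaler0.
Qed.

Lemma core_fwd (x : 'I_d -> 'cV[F]_n) : (exists i, x i != 0) ->
  (forall i : 'I_d, z *: x i = Sx i (fun l => Bs l *m x l)) ->
  exists y : 'cV[F]_n, y != 0 /\ gsGS *m y = z *: y.
Proof.
move=> hne hx.
pose im : 'I_d := Ordinal hm.
pose i0 : 'I_d := Ordinal (leq_ltn_trans (leq0n m) hm).
pose w := x im. pose y := z *: x i0.
have c1 : forall j : 'I_d, (j < m)%N -> Bs j *m x j = Bs j *m w.
  move=> j hj; apply: (scalerI zn0); rewrite !scalemxAr /w !hx !S_mul.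
  rewrite (S_shiftL hj) //= => l h1 h2.
  by rewrite mulmxA hLL // mul0mx.
have c2 : forall j : 'I_d, (m <= j)%N -> Bs j *m x j = Bs j *m y.
  move=> j hj; apply: (scalerI zn0); rewrite scalemxAr hx S_mul /y hx /= S0.
  rewrite S_top ?mulmx_sumr // => l hl.
  by rewrite mulmxA hUU // mul0mx.
have sL : \sum_(l < d | (l < m)%N) Bs l *m x l = L *m w.
  by rewrite -hL mulmx_suml; apply: eq_bigr => l hl; exact: c1.
have sU : \sum_(l < d | (m <= l)%N) Bs l *m x l = U *m y.
  by rewrite -hU mulmx_suml; apply: eq_bigr => l hl; exact: c2.
have eqy : y = L *m w + U *m y by rewrite {1}/y hx /= S0 sum_LU sL sU.
have eqw : z *: w = U *m y + z *: (L *m w) by rewrite /w hx /Sx /= sL sU.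
exists y; split.
- apply/negP => /eqP y0.
  have w0 : w = 0.
    move: eqw; rewrite y0 mulmx0 add0r => /(scalerI zn0) /eqP.
    rewrite -subr_eq0 -{1}(mul1mx w) -mulmxBl => /eqP h.
    by rewrite -(mulKmx uL w) h mulmx0.
  have b0 : forall l, Bs l *m x l = 0.
    by move=> l; case: (ltnP l m) => h; [rewrite c1 // w0 mulmx0 | rewrite c2 // y0 mulmx0].
  case: hne => i; apply/negP; rewrite negbK; apply/eqP.
  apply: (scalerI zn0); rewrite hx scaler0 /Sx !big1 ?scaler0 ?addr0 // => l _; exact: b0.
- have h1 : invmx (1%:M - L) *m U *m y = z *: w.
    rewrite -mulmxA; apply: (canLR (mulKmx uL)).
    by rewrite mulmxBl mul1mx -(scalemxAr z L w) eqw addrK.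
  have h2 : L *m w = (1%:M - U) *m y by rewrite mulmxBl mul1mx {1}eqy addrK.
  have -> : gsGS *m y = invmx (1%:M - U) *m (L *m (invmx (1%:M - L) *m U *m y)).
    by rewrite /gsGS !mulmxA.
  by rewrite h1 -scalemxAr h2 scalemxAr mulKmx.
Qed.

Lemma core_bwd (y : 'cV[F]_n) : y != 0 -> gsGS *m y = z *: y ->
  exists x : 'I_d -> 'cV[F]_n, (exists i, x i != 0) /\
  (forall i : 'I_d, z *: x i = Sx i (fun l => Bs l *m x l)).
Proof.
move=> yn0 hs.
pose w := z^-1 *: (invmx (1%:M - L) *m U *m y).
have zw : z *: w = invmx (1%:M - L) *m U *m y by rewrite /w scalerA divff // scale1r.
have hw1 : (1%:M - L) *m (z *: w) = U *m y by rewrite zw !mulmxA mulmxV // mul1mx.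
have eqw : z *: w = U *m y + z *: (L *m w).
  move: hw1; rewrite mulmxBl mul1mx => /eqP; rewrite subr_eq => /eqP ->.
  by rewrite scalemxAr.
have h2 : L *m w = (1%:M - U) *m y.
  have h : invmx (1%:M - U) *m (L *m (z *: w)) = z *: y.
    by rewrite zw -hs /gsGS !mulmxA.
  move: (congr1 (mulmx (1%:M - U)) h); rewrite mulKVmx // -!scalemxAr.
  exact: scalerI.
have eqy : y = L *m w + U *m y by rewrite h2 mulmxBl mul1mx subrK.
pose v := fun l : 'I_d => if (l < m)%N then w else y.
have sL : \sum_(l < d | (l < m)%N) Bs l *m v l = L *m w.
  by rewrite -hL mulmx_suml; apply: eq_bigr => l hl; rewrite /v hl.
have sU : \sum_(l < d | (m <= l)%N) Bs l *m v l = U *m y.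
  by rewrite -hU mulmx_suml; apply: eq_bigr => l hl; rewrite /v ltnNge hl.
have sall : \sum_(l < d) Bs l *m v l = y by rewrite sum_LU sL sU -eqy.
pose x := fun i : 'I_d => z^-1 *: Sx i (fun l => Bs l *m v l).
have hxS : forall i, z *: x i = Sx i (fun l => Bs l *m v l).
  by move=> i; rewrite /x scalerA divff // scale1r.
have c : forall j : 'I_d, Bs j *m x j = Bs j *m v j.
  move=> j; apply: (scalerI zn0); rewrite !scalemxAr hxS S_mul.
  case: (ltnP j m) => hj.
  - have ->: z *: v j = Sx m (fun l => Bs l *m v l) by rewrite /v hj eqw /Sx sL sU.
    rewrite S_mul (S_shiftL hj) // => l h1 h3.
    by rewrite mulmxA hLL // mul0mx.
  - rewrite S_top; last by move=> l hl; rewrite mulmxA hUU // mul0mx.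
    by rewrite -mulmx_sumr sall /v ltnNge hj /= scalemxAr.
exists x; split.
- case: (pickP (fun i => x i != 0)) => [i hi | h]; first by exists i.
  exfalso; move/negP: yn0; apply; apply/eqP.
  rewrite -sall big1 // => l _; rewrite -c.
  by move/negbFE/eqP: (h l) => ->; rewrite mulmx0.
- by move=> i; rewrite hxS; apply: S_ext => l; rewrite c.
Qed.

End Core.
Section Spec.
Variables (R : realType) (n : nat) (L U : 'M[R]_n).
Hypotheses (hLo : strictly_lower L) (hUp : strictly_upper U).

Lemma sum_one d (P : pred 'I_d) (G : 'I_d -> R) (l0 : 'I_d) :
  P l0 -> (forall l, P l -> l != l0 -> G l = 0) -> \sum_(l < d | P l) G l = G l0.
Proof.
move=> h0 h; rewrite (bigD1 l0) //= big1 ?addr0 // => l /andP [hl hn]; exact: h.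
Qed.

Lemma FTC_LL (j l : 'I_(2 * n - 2)) : (j <= l)%N -> (l < n - 1)%N ->
  FTC L U j *m FTC L U l = 0.
Proof.
move=> hjl hl; have hj : (j < n - 1)%N by lia.
rewrite /FTC hj hl; apply/matrixP => i k; rewrite !mxE big1 // => s _; rewrite !mxE.
do 2 (case: ifP => [/andP [/eqP ? ?]|_]); rewrite ?mul0r ?mulr0 //; exfalso; lia.
Qed.

Lemma FTC_UU (j l : 'I_(2 * n - 2)) : (n - 1 <= j)%N -> (j <= l)%N ->
  FTC L U j *m FTC L U l = 0.
Proof.
move=> hj hjl; have hl : (n - 1 <= l)%N by lia.
rewrite /FTC ltnNge hj ltnNge hl /=; apply/matrixP => i k; rewrite !mxE big1 // => s _; rewrite !mxE.
do 2 (case: ifP => [/andP [/eqP ? ?]|_]); rewrite ?mul0r ?mulr0 //; exfalso; lia.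
Qed.

Lemma FTR_LL (j l : 'I_(2 * n - 2)) : (j <= l)%N -> (l < n - 1)%N ->
  FTR L U j *m FTR L U l = 0.
Proof.
move=> hjl hl; have hj : (j < n - 1)%N by lia.
rewrite /FTR hj hl; apply/matrixP => i k; rewrite !mxE big1 // => s _; rewrite !mxE.
do 2 (case: ifP => [/andP [/eqP ? ?]|_]); rewrite ?mul0r ?mulr0 //; exfalso; lia.
Qed.

Lemma FTR_UU (j l : 'I_(2 * n - 2)) : (n - 1 <= j)%N -> (j <= l)%N ->
  FTR L U j *m FTR L U l = 0.
Proof.
move=> hj hjl; have hl : (n - 1 <= l)%N by lia.
rewrite /FTR ltnNge hj ltnNge hl /=; apply/matrixP => i k; rewrite !mxE big1 // => s _; rewrite !mxE.
do 2 (case: ifP => [/andP [/eqP ? ?]|_]); rewrite ?mul0r ?mulr0 //; exfalso; lia.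
Qed.


Lemma FTC_sumL : \sum_(l < 2 * n - 2 | (l < n - 1)%N) FTC L U l = L.
Proof.
apply/matrixP => i k; rewrite summxE.
have e : forall l : 'I_(2 * n - 2), (l < n - 1)%N -> FTC L U l i k = if (k == l :> nat) then L i k else 0.
  move=> l hl; rewrite /FTC hl !mxE; case: eqP => [he|] //=.
  by case: ltnP => // h; rewrite hLo //; lia.
rewrite (eq_bigr _ e).
case: (ltnP k (n - 1)) => hk.
- have hk2 : (k < 2 * n - 2)%N by lia.
  rewrite (@sum_one _ _ _ (Ordinal hk2)) //= ?eqxx // => l _ hne.
  case: eqP => // he; exfalso; move/negP: hne; apply; apply/eqP/val_inj => /=; lia.
- rewrite big1; first by rewrite hLo //; move: (ltn_ord i); lia.
  by move=> l hl; case: eqP => // he; exfalso; lia.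
Qed.

Lemma FTC_sumU : \sum_(l < 2 * n - 2 | (n - 1 <= l)%N) FTC L U l = U.
Proof.
apply/matrixP => i k; rewrite summxE.
have e : forall l : 'I_(2 * n - 2), (n - 1 <= l)%N -> FTC L U l i k = if (k == (2 * n - 2 - l)%N :> nat) then U i k else 0.
  move=> l hl; rewrite /FTC ltnNge hl /= !mxE; case: eqP => [he|] //=.
  by case: ltnP => // h; rewrite hUp //; lia.
rewrite (eq_bigr _ e).
case: (posnP k) => hk.
- rewrite big1; first by rewrite hUp // hk.
  by move=> l hl; case: eqP => // he; exfalso; move: (ltn_ord l); lia.
- have hk2 : (2 * n - 2 - k < 2 * n - 2)%N by move: (ltn_ord k); lia.
  rewrite (@sum_one _ _ _ (Ordinal hk2)) /= ?ifT //; first (apply/eqP; move: (ltn_ord k); lia).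
    by move: (ltn_ord k); lia.
  move=> l _ hne; case: eqP => // he; exfalso; move/negP: hne; apply; apply/eqP/val_inj => /=.
  by move: (ltn_ord l); lia.
Qed.

Lemma FTR_sumL : \sum_(l < 2 * n - 2 | (l < n - 1)%N) FTR L U l = L.
Proof.
apply/matrixP => i k; rewrite summxE.
have e : forall l : 'I_(2 * n - 2), (l < n - 1)%N -> FTR L U l i k = if (i == l.+1 :> nat) then L i k else 0.
  move=> l hl; rewrite /FTR hl !mxE; case: eqP => [he|] //=.
  by case: ltnP => // h; rewrite hLo //; lia.
rewrite (eq_bigr _ e).
case: (posnP i) => hi.
- rewrite big1; first by rewrite hLo // hi.
  by move=> l hl; case: eqP => // he; exfalso; lia.
- have hi2 : (i.-1 < 2 * n - 2)%N by move: (ltn_ord i); lia.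
  rewrite (@sum_one _ _ _ (Ordinal hi2)) /= ?ifT //; first (apply/eqP; lia).
    by move: (ltn_ord i); lia.
  move=> l _ hne; case: eqP => // he; exfalso; move/negP: hne; apply; apply/eqP/val_inj => /=.
  by lia.
Qed.

Lemma FTR_sumU : \sum_(l < 2 * n - 2 | (n - 1 <= l)%N) FTR L U l = U.
Proof.
apply/matrixP => i k; rewrite summxE.
have e : forall l : 'I_(2 * n - 2), (n - 1 <= l)%N -> FTR L U l i k = if (i == (2 * n - 3 - l)%N :> nat) then U i k else 0.
  move=> l hl; rewrite /FTR ltnNge hl /= !mxE; case: eqP => [he|] //=.
  by case: ltnP => // h; rewrite hUp //; lia.
rewrite (eq_bigr _ e).
case: (ltnP i (n - 1)) => hi.
- have hi2 : (2 * n - 3 - i < 2 * n - 2)%N by lia.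
  rewrite (@sum_one _ _ _ (Ordinal hi2)) /= ?ifT //; first (apply/eqP; lia).
    by lia.
  move=> l _ hne; case: eqP => // he; exfalso; move/negP: hne; apply; apply/eqP/val_inj => /=.
  by move: (ltn_ord l); lia.
- rewrite big1; first by rewrite hUp //; move: (ltn_ord k); lia.
  by move=> l hl; case: eqP => // he; exfalso; move: (ltn_ord l); lia.
Qed.

End Spec.

Section Glue.
Variable R : realType.
Local Notation f := (real_complex R).

Lemma strict_lower_unit n (L : 'M[R]_n) : strictly_lower L -> (1%:M - L) \in unitmx.
Proof.
move=> h; rewrite unitmxE det_trig.
  by rewrite big1 ?unitr1 // => i _; rewrite !mxE eqxx h // subr0.
apply/is_trig_mxP => i j hij; rewrite !mxE h; last exact: ltnW.
by rewrite subr0; case: eqP => // e; move: hij; rewrite e ltnn.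
Qed.

Lemma strict_upper_unit n (U : 'M[R]_n) : strictly_upper U -> (1%:M - U) \in unitmx.
Proof.
move=> h; rewrite -unitmx_tr linearB /= tr_scalar_mx; apply: strict_lower_unit.
by move=> i j hij; rewrite mxE h.
Qed.

Lemma nz_eig_iff m (A : 'M[R]_m) (z : R[i]) :
  nz_eigenvalue A z <-> z != 0 /\ exists c : 'cV_m, c != 0 /\ map_mx f A *m c = z *: c.
Proof.
rewrite /nz_eigenvalue map_char_poly; split => [[h1 h2]|[h1 h2]]; split => //.
  exact/root_char_eigvec.
exact/root_char_eigvec.
Qed.

Lemma map_blockL n d (Bs : 'I_d -> 'M[R]_n) :
  map_mx f (blockL Bs) = gL (fun p => map_mx f (Bs p)).
Proof. by apply/matrixP => i j; rewrite /blockL /gL !mxE; case: ifP; rewrite ?mxE ?raddf0. Qed.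

Lemma map_blockU n d (Bs : 'I_d -> 'M[R]_n) :
  map_mx f (blockU Bs) = gU (fun p => map_mx f (Bs p)).
Proof. by apply/matrixP => i j; rewrite /blockU /gU !mxE; case: ifP; rewrite ?mxE ?raddf0. Qed.

Lemma map_iter n d (Bs : 'I_d -> 'M[R]_n) :
  map_mx f (iter_mx Bs) =
  invmx (1%:M - gL (fun p => map_mx f (Bs p))) *m gU (fun p => map_mx f (Bs p)).
Proof. by rewrite /iter_mx map_mxM map_invmx map_mxB map_mx1 map_blockL map_blockU. Qed.

Lemma map_sGS n (L U : 'M[R]_n) :
  map_mx f (sGS L U) = gsGS (map_mx f L) (map_mx f U).
Proof. by rewrite /sGS /gsGS !map_mxM !map_invmx !map_mxB !map_mx1. Qed.

Lemma map_sum n d (P : pred 'I_d) (G : 'I_d -> 'M[R]_n) :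
  map_mx f (\sum_(l < d | P l) G l) = \sum_(l < d | P l) map_mx f (G l).
Proof. exact: raddf_sum. Qed.


Lemma key_equiv n (L U : 'M[R]_n) (Bs : 'I_(2 * n - 2) -> 'M[R]_n) (z : R[i]) :
  strictly_lower L -> strictly_upper U ->
  (forall j l : 'I_(2 * n - 2), (j <= l)%N -> (l < n - 1)%N -> Bs j *m Bs l = 0) ->
  (forall j l : 'I_(2 * n - 2), (n - 1 <= j)%N -> (j <= l)%N -> Bs j *m Bs l = 0) ->
  \sum_(l < 2 * n - 2 | (l < n - 1)%N) Bs l = L ->
  \sum_(l < 2 * n - 2 | (n - 1 <= l)%N) Bs l = U ->
  nz_eigenvalue (iter_mx Bs) z <-> nz_eigenvalue (sGS L U) z.
Proof.
move=> hLo hUp hLL hUU hL hU.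
rewrite nz_eig_iff map_iter nz_eig_iff map_sGS.
pose Bs' := fun p => map_mx f (Bs p).
have hLL' : forall j l : 'I_(2 * n - 2), (j <= l)%N -> (l < n - 1)%N -> Bs' j *m Bs' l = 0.
  by move=> j l h1 h2; rewrite /Bs' -map_mxM hLL // map_mx0.
have hUU' : forall j l : 'I_(2 * n - 2), (n - 1 <= j)%N -> (j <= l)%N -> Bs' j *m Bs' l = 0.
  by move=> j l h1 h2; rewrite /Bs' -map_mxM hUU // map_mx0.
have hL' : \sum_(l < 2 * n - 2 | (l < n - 1)%N) Bs' l = map_mx f L by rewrite -hL map_sum.
have hU' : \sum_(l < 2 * n - 2 | (n - 1 <= l)%N) Bs' l = map_mx f U by rewrite -hU map_sum.
have uL : 1%:M - map_mx f L \in unitmx.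
  by rewrite -(map_mx1 f) -map_mxB map_unitmx strict_lower_unit.
have uU : 1%:M - map_mx f U \in unitmx.
  by rewrite -(map_mx1 f) -map_mxB map_unitmx strict_upper_unit.
split => [[zn0 [c [cn0 hc]]] | [zn0 [y [yn0 hy]]]]; split => //.
- have [x [hne hx]] := (proj1 (block_eig Bs' zn0)) (ex_intro _ c (conj cn0 hc)).
  case: (ltnP (n - 1) (2 * n - 2)) => hm.
  + exact: (core_fwd hm zn0 hLL' hUU' hL' hU' uL uU hne hx).
  + exfalso; case: hne => i _; move: (ltn_ord i); lia.
- case: (ltnP (n - 1) (2 * n - 2)) => hm.
  + have [x [hne hx]] := core_bwd hm zn0 hLL' hUU' hL' hU' uL uU yn0 hy.
    by apply/(block_eig Bs' zn0); exists x.
  + exfalso.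
    have L0 : map_mx f L = 0.
      apply/matrixP => i k; rewrite !mxE hLo ?raddf0 //; move: (ltn_ord i) (ltn_ord k); lia.
    move: hy; rewrite /gsGS L0 mulmx0 !mul0mx => /esym/eqP.
    by rewrite scaler_eq0 (negbTE zn0) (negbTE yn0).
Qed.

End Glue.

Theorem theorem6p5 (R : realType) (n : nat) (L U : 'M[R]_n) :
  strictly_lower L -> strictly_upper U ->
  (forall j, (j < n - 1)%N -> Lcol L j != 0) ->
  (forall j, (1 <= j < n)%N -> Ucol U j != 0) ->
  (forall i, (1 <= i < n)%N -> Lrow L i != 0) ->
  (forall i, (i < n - 1)%N -> Urow U i != 0) ->
  forall z : R[i],
    (nz_eigenvalue (iter_mx (FTC L U)) z <-> nz_eigenvalue (sGS L U) z) /\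
    (nz_eigenvalue (iter_mx (FTR L U)) z <-> nz_eigenvalue (sGS L U) z).
Proof.
move=> hLo hUp _ _ _ _ z; split; apply: key_equiv => //.
- exact: FTC_LL.
- exact: FTC_UU.
- exact: FTC_sumL.
- exact: FTC_sumU.
- exact: FTR_LL.
- exact: FTR_UU.
- exact: FTR_sumL.
- exact: FTR_sumU.
Qed.
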